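(* Let $D=(D_1,D_2)\in\mathcal{U}(n,s_1^ps_2^q)$, where $D_1\in\mathcal{U}(n,s_1^p)$ consists of $p$ qualitative factors with $s_1$ levels and $D_2\in\mathcal{U}(n,s_2^q)$ consists of $q$ quantitative factors with $s_2$ levels. If $s_2$ is odd, then $\mathrm{QQD}^2(D)\ge LB_{odd}$, where \begin{align*}LB_{odd}=&-\left(\frac{5s_1+1}{4s_1}\right)^p\left(\frac43\right)^q+\frac1n\left(\frac32\right)^{p+q}+\frac{n-1}{n}\left(\frac54\right)^p\left(\frac65\right)^{\frac{p(n-s_1)}{s_1(n-1)}}\left(\frac32\right)^{\frac{q(n-s_2)}{s_2(n-1)}}\prod_{i=1}^{(s_2-1)/2}\left(\frac32-\frac{2i(2s_2-2i)}{4s_2^2}\right)^{\frac{2nq}{s_2(n-1)}};\end{align*} if $s_2$ is even, then $\mathrm{QQD}^2(D)\ge LB_{even}$, where \begin{align*}LB_{even}=&-\left(\frac{5s_1+1}{4s_1}\right)^p\left(\frac43\right)^q+\frac1n\left(\frac32\right)^{p+q}+\frac{n-1}{n}\left(\frac54\right)^p\left(\frac65\right)^{\frac{p(n-s_1)}{s_1(n-1)}}\left(\frac32\right)^{\frac{q(n-s_2)}{s_2(n-1)}}\left(\frac54\right)^{\frac{nq}{s_2(n-1)}}\prod_{i=1}^{(s_2/2)-1}\left(\frac32-\frac{2i(2s_2-2i)}{4s_2^2}\right)^{\frac{2nq}{s_2(n-1)}}.\end{align*}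
   Context: A U-type design in $\mathcal{U}(n,s_1^{p}s_2^{q})$ is an $n\times(p+q)$ matrix whose first $p$ columns each take every value in $\{0,\dots,s_1-1\}$ equally often and whose last $q$ columns each take every value in $\{0,\dots,s_2-1\}$ equally often; the first $p$ columns are qualitative, the last $q$ quantitative. For quantitative columns a level $x$ is transformed to $(2x+1)/(2s_2)\in[0,1]$. Let $\chi=\prod_k\chi_k$, $\chi_k=\{0,\dots,s_1-1\}$ for $k\le p$, $\chi_k=[0,1]$ for $k>p$, and $F$ the uniform distribution on $\chi$. Kernel: $\mathcal{K}(t,z)=\prod_k\mathcal{K}_k(t_k,z_k)$ with $\mathcal{K}_k=(3/2)^{\delta_{t_kz_k}}(5/4)^{1-\delta_{t_kz_k}}$ for $k\le p$ ($\delta$ the Kronecker delta) and $\mathcal{K}_k=\frac32-|t_k-z_k|+|t_k-z_k|^2$ for $k>p$. For $D$ with (transformed) rows $x_1,\dots,x_n$, the squared qualitative-quantitative discrepancy is $\mathrm{QQD}^2(D)=\int_{\chi^2}\mathcal{K}\,dF\,dF-\frac2n\sum_i\int_\chi\mathcal{K}(t,x_i)dF(t)+\frac1{n^2}\sum_{i,j}\mathcal{K}(x_i,x_j)$. Empty products are $1$. *)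

(* Defs.v *)
From Stdlib Require Import Reals List Arith.
From Coquelicot Require Import Coquelicot.
Open Scope R_scope.

(* finite sum  sum_{i<m} f i  and finite product prod_{i=1}^{m} f i (empty = 1) *)
Fixpoint sumR (m : nat) (f : nat -> R) : R :=
  match m with O => 0 | S m' => sumR m' f + f m' end.
Fixpoint prod1R (m : nat) (f : nat -> R) : R :=
  match m with O => 1 | S m' => prod1R m' f * f m end.

Definition count_level (n : nat) (D : nat -> nat -> nat) (k a : nat) : nat :=
  length (filter (fun i => Nat.eqb (D i k) a) (seq 0 n)).

Definition Utype (n p q s1 s2 : nat) (D : nat -> nat -> nat) : Prop :=
  (forall i k, (i < n)%nat -> (k < p)%nat -> (D i k < s1)%nat) /\
  (forall i k, (i < n)%nat -> (p <= k < p + q)%nat -> (D i k < s2)%nat) /\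
  (forall k a, (k < p)%nat -> (a < s1)%nat -> (count_level n D k a * s1 = n)%nat) /\
  (forall k a, (p <= k < p + q)%nat -> (a < s2)%nat -> (count_level n D k a * s2 = n)%nat).

(* points of chi are coordinate vectors t : nat -> R, coordinates 0..p+q-1 *)
Definition upd (x : nat -> R) (k : nat) (a : R) : nat -> R :=
  fun j => if Nat.eqb j k then a else x j.

Definition kern (p q : nat) (t z : nat -> R) : R :=
  prod1R p (fun k => if Req_EM_T (t (k - 1)%nat) (z (k - 1)%nat) then 3/2 else 5/4) *
  prod1R q (fun k => let d := Rabs (t (p + k - 1)%nat - z (p + k - 1)%nat) in
                     3/2 - d + d ^ 2).

(* integration of coordinate k against the uniform marginal of F:
   uniform on {0,...,s1-1} for k < p, Lebesgue on [0,1] for k >= p *)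
Definition integ_coord (p s1 : nat) (k : nat) (f : (nat -> R) -> R) : (nat -> R) -> R :=
  fun x => if Nat.ltb k p
           then / INR s1 * sumR s1 (fun a => f (upd x k (INR a)))
           else RInt (fun u => f (upd x k u)) 0 1.

Fixpoint integ_aux (p s1 : nat) (m : nat) (f : (nat -> R) -> R) : (nat -> R) -> R :=
  match m with
  | O => f
  | S m' => integ_aux p s1 m' (integ_coord p s1 m' f)
  end.

(* int_chi f dF(t)  (as an iterated integral over the coordinates, Fubini) *)
Definition intF (p q s1 : nat) (f : (nat -> R) -> R) : R :=
  integ_aux p s1 (p + q) f (fun _ => 0).

Definition row (p s2 : nat) (D : nat -> nat -> nat) (i : nat) : nat -> R :=
  fun k => if Nat.ltb k p then INR (D i k)
           else (2 * INR (D i k) + 1) / (2 * INR s2).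

Definition QQD2 (n p q s1 s2 : nat) (D : nat -> nat -> nat) : R :=
  intF p q s1 (fun t => intF p q s1 (fun z => kern p q t z))
  - 2 / INR n * sumR n (fun i => intF p q s1 (fun t => kern p q t (row p s2 D i)))
  + 1 / (INR n ^ 2) * sumR n (fun i => sumR n (fun j =>
        kern p q (row p s2 D i) (row p s2 D j))).

Definition prod_term (n q s2 : nat) (m : nat) : R :=
  prod1R m (fun i => Rpower (3/2 - 2 * INR i * (2 * INR s2 - 2 * INR i) / (4 * INR s2 ^ 2))
                            (2 * INR n * INR q / (INR s2 * (INR n - 1)))).

Definition LB_odd (n p q s1 s2 : nat) : R :=
  - ((5 * INR s1 + 1) / (4 * INR s1)) ^ p * (4/3) ^ q
  + 1 / INR n * (3/2) ^ (p + q)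
  + (INR n - 1) / INR n * (5/4) ^ p
    * Rpower (6/5) (INR p * (INR n - INR s1) / (INR s1 * (INR n - 1)))
    * Rpower (3/2) (INR q * (INR n - INR s2) / (INR s2 * (INR n - 1)))
    * prod_term n q s2 ((s2 - 1) / 2).

Definition LB_even (n p q s1 s2 : nat) : R :=
  - ((5 * INR s1 + 1) / (4 * INR s1)) ^ p * (4/3) ^ q
  + 1 / INR n * (3/2) ^ (p + q)
  + (INR n - 1) / INR n * (5/4) ^ p
    * Rpower (6/5) (INR p * (INR n - INR s1) / (INR s1 * (INR n - 1)))
    * Rpower (3/2) (INR q * (INR n - INR s2) / (INR s2 * (INR n - 1)))
    * Rpower (5/4) (INR n * INR q / (INR s2 * (INR n - 1)))
    * prod_term n q s2 (s2 / 2 - 1).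

(* Main.v *)
Require Import Defs.
From Stdlib Require Import Reals Arith Lra Lia List FunctionalExtensionality.
From Coquelicot Require Import Coquelicot.
Open Scope R_scope.

Fixpoint prodN (N : nat) (g : nat -> R) : R :=
  match N with O => 1 | S N' => prodN N' g * g N' end.

Lemma prodN_ext N f g : (forall k, (k < N)%nat -> f k = g k) -> prodN N f = prodN N g.
Proof. induction N; intros H; simpl; auto. rewrite IHN by (intros; apply H; lia). rewrite H by lia. auto. Qed.

Lemma sumR_ext N f g : (forall k, (k < N)%nat -> f k = g k) -> sumR N f = sumR N g.
Proof. induction N; intros H; simpl; auto. rewrite IHN by (intros; apply H; lia). rewrite H by lia. auto. Qed.

Lemma prod1R_prodN m f : prod1R m f = prodN m (fun k => f (S k)).
Proof. induction m; simpl; congruence. Qed.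

Lemma prodN_add a b g : prodN (a+b) g = prodN a g * prodN b (fun k => g (a+k)%nat).
Proof. induction b; simpl. rewrite Nat.add_0_r; ring. rewrite Nat.add_succ_r; simpl; rewrite IHb; ring. Qed.

Lemma prodN_one N : prodN N (fun _ => 1) = 1.
Proof. induction N; simpl; auto. rewrite IHN; ring. Qed.

Lemma prodN_pick N m al g : (m < N)%nat ->
  prodN N (fun k => if Nat.eqb k m then al else g k) =
  al * prodN N (fun k => if Nat.eqb k m then 1 else g k).
Proof.
  induction N; intros H; simpl. lia.
  destruct (Nat.eq_dec m N).
  - subst. rewrite Nat.eqb_refl.
    assert (A1 : forall c, prodN N (fun k => if Nat.eqb k N then c else g k) = prodN N g).
    { intro c. apply prodN_ext. intros k Hk; destruct (Nat.eqb_spec k N); auto; lia. }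
    rewrite !A1. ring.
  - rewrite IHN by lia. destruct (Nat.eqb_spec N m); [lia|]. ring.
Qed.

Lemma sumR_mult_r N f c : sumR N (fun a => f a * c) = sumR N f * c.
Proof. induction N; simpl. ring. rewrite IHN; ring. Qed.

Lemma sumR_const N c : sumR N (fun _ => c) = INR N * c.
Proof. induction N; simpl sumR. simpl; ring. rewrite IHN, S_INR; ring. Qed.

Definition prodform (N : nat) (h : nat -> R -> R) (x : nat -> R) : R :=
  prodN N (fun k => h k (x k)).
Definition Icoord (p s1 : nat) (k : nat) (g : R -> R) : R :=
  if Nat.ltb k p then / INR s1 * sumR s1 (fun a => g (INR a)) else RInt g 0 1.
Definition hupd (h : nat -> R -> R) (m : nat) (c : R) : nat -> R -> R :=
  fun k => if Nat.eqb k m then (fun _ : R => c) else h k.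

Lemma ic_prod p s1 N m (h : nat -> R -> R) : (m < N)%nat -> (Nat.ltb m p = false -> ex_RInt (h m) 0 1) ->
  integ_coord p s1 m (prodform N h) = prodform N (hupd h m (Icoord p s1 m (h m))).
Proof.
  intros Hm Hex. apply functional_extensionality; intro x.
  unfold integ_coord, prodform, Icoord, hupd.
  set (P := prodN N (fun k => if Nat.eqb k m then 1 else h k (x k))).
  assert (E : forall u, prodN N (fun k => h k (upd x m u k)) = h m u * P).
  { intro u. unfold P. rewrite <- prodN_pick by exact Hm. apply prodN_ext. intros k _.
    unfold upd. destruct (Nat.eqb_spec k m); subst; auto. }
  assert (E2 : forall c, prodN N (fun k => (if Nat.eqb k m then fun _ : R => c else h k) (x k)) = c * P).
  { intro c. unfold P. rewrite <- prodN_pick by exact Hm. apply prodN_ext. intros k _.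
    destruct (Nat.eqb_spec k m); auto. }
  rewrite E2. destruct (Nat.ltb m p).
  - rewrite (sumR_ext _ _ (fun a => h m (INR a) * P)) by (intros; apply E).
    rewrite sumR_mult_r. ring.
  - rewrite (RInt_ext _ (fun u => scal P (h m u))).
    rewrite (RInt_scal (h m)) by (apply Hex; reflexivity).
    change (scal P (RInt (h m) 0 1)) with (P * RInt (h m) 0 1). ring.
    intros u _. rewrite E. change (h m u * P = P * h m u). ring.
Qed.

Lemma integ_aux_prod p s1 N : forall m h x, (m <= N)%nat ->
  (forall k, (k < N)%nat -> Nat.ltb k p = false -> ex_RInt (h k) 0 1) ->
  integ_aux p s1 m (prodform N h) x =
  prodN m (fun k => Icoord p s1 k (h k)) * prodN N (fun k => if Nat.ltb k m then 1 else h k (x k)).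
Proof.
  induction m; intros h x Hm Hex; simpl in h.
  - simpl. unfold prodform. ring.
  - simpl integ_aux. rewrite ic_prod by (try lia; intros; apply Hex; auto; lia).
    rewrite IHm.
    2: lia.
    2:{ intros k Hk Hl. unfold hupd. destruct (Nat.eqb k m). apply ex_RInt_const. auto. }
    simpl prodN.
    rewrite (prodN_ext m (fun k => Icoord p s1 k (hupd h m _ k)) (fun k => Icoord p s1 k (h k))).
    2:{ intros k Hk. unfold hupd. destruct (Nat.eqb_spec k m); [lia|auto]. }
    rewrite (prodN_ext N (fun k => if Nat.ltb k m then 1 else hupd h m _ k (x k))
       (fun k => if Nat.eqb k m then Icoord p s1 m (h m) else (if Nat.ltb k (S m) then 1 else h k (x k)))).
    2:{ intros k Hk. unfold hupd. destruct (Nat.eqb_spec k m), (Nat.ltb_spec k m), (Nat.ltb_spec k (S m)); auto; lia. }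
    rewrite prodN_pick by lia.
    rewrite (prodN_ext N (fun k => if Nat.eqb k m then 1 else _) (fun k => if Nat.ltb k (S m) then 1 else h k (x k))).
    ring.
    intros k Hk. destruct (Nat.eqb_spec k m), (Nat.ltb_spec k (S m)); auto; lia.
Qed.

Lemma intF_prod p q s1 (h : nat -> R -> R) :
  (forall k, (k < p + q)%nat -> Nat.ltb k p = false -> ex_RInt (h k) 0 1) ->
  intF p q s1 (prodform (p+q) h) = prodN (p+q) (fun k => Icoord p s1 k (h k)).
Proof.
  intros Hex. unfold intF. rewrite integ_aux_prod by (auto; lia).
  rewrite (prodN_ext (p+q) (fun k => if Nat.ltb k (p+q) then 1 else h k 0) (fun _ => 1)). rewrite prodN_one; ring.
  intros k Hk. destruct (Nat.ltb_spec k (p+q)); auto; lia.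
Qed.

Definition Qf (v w : R) : R := let d := Rabs (v - w) in 3/2 - d + d^2.

Definition Hk (p : nat) (k : nat) (v w : R) : R :=
  if Nat.ltb k p then (if Req_EM_T v w then 3/2 else 5/4) else Qf v w.

Lemma kern_prod p q t z : kern p q t z = prodN (p+q) (fun k => Hk p k (t k) (z k)).
Proof.
  unfold kern. rewrite prodN_add, !prod1R_prodN. f_equal; apply prodN_ext; intros k Hk0; unfold Hk.
  - replace (S k - 1)%nat with k by lia. destruct (Nat.ltb_spec k p); [auto|lia].
  - replace (p + S k - 1)%nat with (p + k)%nat by lia. destruct (Nat.ltb_spec (p+k) p); [lia|auto].
Qed.

Lemma Hk_sym p k v w : Hk p k v w = Hk p k w v.
Proof.
  unfold Hk, Qf. destruct (Nat.ltb k p).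
  - destruct (Req_EM_T v w), (Req_EM_T w v); auto; subst; congruence.
  - rewrite Rabs_minus_sym. auto.
Qed.

Lemma Qf_cont v x : continuous (Qf v) x.
Proof.
unfold Qf.
apply (continuous_plus (fun w => 3/2 - Rabs (v - w)) (fun w => Rabs (v-w)^2)).
apply (continuous_minus (fun w => 3/2) (fun w => Rabs (v - w))). apply continuous_const.
apply continuous_Rabs_comp. apply (continuous_minus (fun w => v) (fun w => w)). apply continuous_const. apply continuous_id.
apply (continuous_comp (fun w => Rabs (v-w)) (fun d => d^2)).
apply continuous_Rabs_comp. apply (continuous_minus (fun w => v) (fun w => w)). apply continuous_const. apply continuous_id.
apply (ex_derive_continuous (K:=R_AbsRing) (V:=R_NormedModule) (fun d => d^2)). auto_derive. auto.
Qed.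

Lemma Qf_ex v : ex_RInt (Qf v) 0 1.
Proof. apply (ex_RInt_continuous (V:=R_CompleteNormedModule)). intros; apply Qf_cont. Qed.

Lemma Qf_int v : 0 <= v <= 1 -> is_RInt (Qf v) 0 1 (4/3).
Proof.
  intros Hv.
  set (F1 := fun w => 3/2*w - v*w + w^2/2 - (v-w)^3/3).
  set (F2 := fun w => 3/2*w - w^2/2 + v*w + (w-v)^3/3).
  assert (H1 : is_RInt (Qf v) 0 v (minus (F1 v) (F1 0))).
  { apply (is_RInt_ext (fun w => 3/2 - (v - w) + (v-w)^2)).
    - intros x Hx. rewrite Rmin_left, Rmax_right in Hx by lra. unfold Qf.
      rewrite Rabs_pos_eq by lra. auto.
    - apply (is_RInt_derive (V:=R_CompleteNormedModule)).
      + intros x _. unfold F1. auto_derive. auto.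
        match goal with |- ?a = ?b => change (@eq R a b) end. field.
      + intros x _. apply (ex_derive_continuous (K:=R_AbsRing) (V:=R_NormedModule)
           (fun w => 3/2 - (v - w) + (v-w)^2)). auto_derive. auto. }
  assert (H2 : is_RInt (Qf v) v 1 (minus (F2 1) (F2 v))).
  { apply (is_RInt_ext (fun w => 3/2 - (w - v) + (w-v)^2)).
    - intros x Hx. rewrite Rmin_left, Rmax_right in Hx by lra. unfold Qf.
      rewrite Rabs_minus_sym, Rabs_pos_eq by lra. auto.
    - apply (is_RInt_derive (V:=R_CompleteNormedModule)).
      + intros x _. unfold F2. auto_derive. auto.
        match goal with |- ?a = ?b => change (@eq R a b) end. field.
      + intros x _. apply (ex_derive_continuous (K:=R_AbsRing) (V:=R_NormedModule)
           (fun w => 3/2 - (w - v) + (w-v)^2)). auto_derive. auto. }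
  pose proof (is_RInt_Chasles _ _ _ _ _ _ H1 H2) as H.
  replace (4/3) with (plus (minus (F1 v) (F1 0)) (minus (F2 1) (F2 v))). exact H.
  unfold F1, F2, minus, plus, opp. simpl. field.
Qed.

Lemma Qf_RInt v : 0 <= v <= 1 -> RInt (Qf v) 0 1 = 4/3.
Proof. intros; apply is_RInt_unique, Qf_int; auto. Qed.

Lemma sum_ind_INR s b x y : (b < s)%nat ->
  sumR s (fun a => if Req_EM_T (INR b) (INR a) then x else y) = x + (INR s - 1) * y.
Proof.
  induction s; intros H. lia.
  simpl sumR. destruct (Nat.eq_dec b s).
  - subst. rewrite (sumR_ext _ _ (fun _ => y)), sumR_const.
    destruct (Req_EM_T (INR s) (INR s)); [|congruence]. rewrite S_INR; ring.
    intros k Hk. destruct (Req_EM_T (INR s) (INR k)); auto. apply INR_eq in e; lia.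
  - rewrite IHs by lia. destruct (Req_EM_T (INR b) (INR s)). apply INR_eq in e; lia.
    rewrite S_INR; ring.
Qed.

Definition cq1 (s1 : nat) : R := / INR s1 * (3/2 + (INR s1 - 1) * (5/4)).

Lemma Icoord_Hk p s1 k v :
  (k < p)%nat -> (exists b, v = INR b /\ (b < s1)%nat) ->
  Icoord p s1 k (Hk p k v) = cq1 s1.
Proof.
  intros Hk0 [b [-> Hb]]. unfold Icoord, Hk. destruct (Nat.ltb_spec k p); [|lia].
  unfold cq1. f_equal. apply sum_ind_INR; auto.
Qed.

Lemma Icoord_Hk2 p s1 k v :
  (p <= k)%nat -> 0 <= v <= 1 -> Icoord p s1 k (Hk p k v) = 4/3.
Proof.
  intros Hk0 Hv. unfold Icoord. destruct (Nat.ltb_spec k p); [lia|].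
  rewrite (RInt_ext _ (Qf v)). apply Qf_RInt; auto.
  intros; unfold Hk. destruct (Nat.ltb_spec k p); [lia|auto].
Qed.

Definition cval (p s1 : nat) (k : nat) : R := if Nat.ltb k p then cq1 s1 else 4/3.

Lemma Hk_Qf p k v : (p <= k)%nat -> Hk p k v = Qf v.
Proof. intros H. apply functional_extensionality; intro w. unfold Hk.
  destruct (Nat.ltb_spec k p); [lia|auto]. Qed.

Lemma inner_eq p q s1 t :
  intF p q s1 (fun z => kern p q t z) = prodN (p+q) (fun k => Icoord p s1 k (Hk p k (t k))).
Proof.
  rewrite (functional_extensionality (fun z => kern p q t z) (prodform (p+q) (fun k => Hk p k (t k)))).
  2:{ intro z. rewrite kern_prod. reflexivity. }
  apply intF_prod. intros k Hk0 Hl. apply Nat.ltb_ge in Hl. rewrite Hk_Qf by auto. apply Qf_ex.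
Qed.

Lemma inner_sym p q s1 z :
  intF p q s1 (fun t => kern p q t z) = intF p q s1 (fun t => kern p q z t).
Proof.
  f_equal. apply functional_extensionality; intro t. rewrite !kern_prod.
  apply prodN_ext; intros; apply Hk_sym.
Qed.

Lemma inner_valid p q s1 z :
  (forall k, (k < p)%nat -> exists b, z k = INR b /\ (b < s1)%nat) ->
  (forall k, (p <= k < p + q)%nat -> 0 <= z k <= 1) ->
  intF p q s1 (fun t => kern p q z t) = prodN (p+q) (cval p s1).
Proof.
  intros H1 H2. rewrite inner_eq. apply prodN_ext. intros k Hk0. unfold cval.
  destruct (Nat.ltb_spec k p).
  - apply Icoord_Hk; auto.
  - apply Icoord_Hk2; [lia| apply H2; lia].
Qed.

Lemma prodN_const N c : prodN N (fun _ => c) = c ^ N.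
Proof. induction N; simpl; auto. rewrite IHN; ring. Qed.

Lemma prodN_cval p q s1 : prodN (p+q) (cval p s1) = cq1 s1 ^ p * (4/3) ^ q.
Proof.
  rewrite prodN_add. rewrite <- !prodN_const. f_equal; apply prodN_ext; intros k Hk0; unfold cval.
  destruct (Nat.ltb_spec k p); [auto|lia].
  destruct (Nat.ltb_spec (p+k) p); [lia|auto].
Qed.

Lemma A_eq p q s1 : (1 <= s1)%nat ->
  intF p q s1 (fun t => intF p q s1 (fun z => kern p q t z)) = cq1 s1 ^ p * (4/3) ^ q.
Proof.
  intros Hs1.
  rewrite (functional_extensionality (fun t => intF p q s1 (fun z => kern p q t z))
     (prodform (p+q) (fun k v => Icoord p s1 k (Hk p k v)))).
  2:{ intro t. rewrite inner_eq. reflexivity. }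
  rewrite intF_prod.
  - rewrite <- prodN_cval. apply prodN_ext. intros k Hk0. unfold cval.
    destruct (Nat.ltb_spec k p).
    + unfold Icoord at 1. destruct (Nat.ltb_spec k p); [|lia].
      rewrite (sumR_ext _ _ (fun _ => cq1 s1)).
      rewrite sumR_const. field. apply not_0_INR; lia.
      intros a Ha. apply Icoord_Hk; eauto.
    + unfold Icoord at 1. destruct (Nat.ltb_spec k p); [lia|].
      rewrite (RInt_ext _ (fun _ => 4/3)). rewrite RInt_const.
      change (scal (1 - 0) (4/3)) with ((1-0) * (4/3)). ring.
      intros x Hx. rewrite Rmin_left, Rmax_right in Hx by lra.
      apply Icoord_Hk2; auto; lra.
  - intros k Hk0 Hl. apply Nat.ltb_ge in Hl.
    apply (ex_RInt_ext (fun _ => 4/3)).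
    + intros x Hx. rewrite Rmin_left, Rmax_right in Hx by lra.
      symmetry; apply Icoord_Hk2; auto; lra.
    + apply ex_RInt_const.
Qed.

Lemma sumR_plus N f g : sumR N (fun k => f k + g k) = sumR N f + sumR N g.
Proof. induction N; simpl. ring. rewrite IHN; ring. Qed.
Lemma sumR_minus N f g : sumR N (fun k => f k - g k) = sumR N f - sumR N g.
Proof. induction N; simpl. ring. rewrite IHN; ring. Qed.
Lemma sumR_scal N c f : sumR N (fun k => c * f k) = c * sumR N f.
Proof. induction N; simpl. ring. rewrite IHN; ring. Qed.
Lemma sumR_le N f g : (forall k, (k < N)%nat -> f k <= g k) -> sumR N f <= sumR N g.
Proof. induction N; intros H; simpl. lra. pose proof (H N ltac:(lia)). pose proof (IHN ltac:(intros; apply H; lia)). lra. Qed.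
Lemma sumR_add a b g : sumR (a+b) g = sumR a g + sumR b (fun k => g (a+k)%nat).
Proof. induction b; simpl. rewrite Nat.add_0_r; ring. rewrite Nat.add_succ_r; simpl; rewrite IHb; ring. Qed.
Lemma sumR_front m f : sumR (S m) f = f O + sumR m (fun i => f (S i)).
Proof. induction m; simpl in *. ring. rewrite IHm. ring. Qed.
Lemma sumR_swap n m (f : nat -> nat -> R) :
  sumR n (fun i => sumR m (fun j => f i j)) = sumR m (fun j => sumR n (fun i => f i j)).
Proof. induction n; simpl. rewrite sumR_const; simpl; ring.
  rewrite IHn. rewrite <- sumR_plus. reflexivity. Qed.

Lemma sumR_if N i f : (i < N)%nat ->
  sumR N (fun j => if Nat.eqb j i then 0 else f j) = sumR N f - f i.
Proof.
  induction N; intros H; simpl. lia.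
  destruct (Nat.eq_dec i N).
  - subst. rewrite Nat.eqb_refl. rewrite (sumR_ext _ _ f). ring.
    intros k Hk. destruct (Nat.eqb_spec k N); [lia|auto].
  - rewrite IHN by lia. destruct (Nat.eqb_spec N i); [lia|]. ring.
Qed.

Lemma sumR_pick s c (psi : nat -> R) : (c < s)%nat ->
  sumR s (fun b => if Nat.eqb c b then psi b else 0) = psi c.
Proof.
  intros H. rewrite (sumR_ext _ _ (fun b => psi b - (if Nat.eqb b c then 0 else psi b))).
  rewrite sumR_minus, sumR_if by auto. ring.
  intros k Hk. destruct (Nat.eqb_spec c k), (Nat.eqb_spec k c); subst; try lia; ring.
Qed.

Lemma count_sum n D k b : INR (count_level n D k b) =
  sumR n (fun j => if Nat.eqb (D j k) b then 1 else 0).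
Proof.
  induction n. reflexivity.
  unfold count_level in *. rewrite seq_S, filter_app, length_app, plus_INR, IHn.
  simpl. destruct (Nat.eqb (D n k) b); simpl; ring.
Qed.

Lemma column_sum n D k s (psi : nat -> R) : (1 <= s)%nat ->
  (forall j, (j < n)%nat -> (D j k < s)%nat) ->
  (forall b, (b < s)%nat -> (count_level n D k b * s = n)%nat) ->
  sumR n (fun j => psi (D j k)) = INR n / INR s * sumR s psi.
Proof.
  intros Hs H1 H2.
  rewrite (sumR_ext n _ (fun j => sumR s (fun b => if Nat.eqb (D j k) b then psi b else 0))).
  2:{ intros j Hj. rewrite sumR_pick; auto. }
  rewrite sumR_swap.
  rewrite <- sumR_scal. apply sumR_ext. intros b Hb.
  rewrite (sumR_ext n _ (fun j => psi b * (if Nat.eqb (D j k) b then 1 else 0))).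
  2:{ intros j Hj. destruct (Nat.eqb (D j k) b); ring. }
  rewrite sumR_scal, <- count_sum.
  assert (E : INR (count_level n D k b) * INR s = INR n) by (rewrite <- mult_INR, H2; auto).
  assert (INR s <> 0) by (apply not_0_INR; lia).
  rewrite <- E. field. auto.
Qed.

Lemma sumR_peel2 m f : sumR (S (S m)) f = f O + sumR m (fun i => f (S i)) + f (S m).
Proof. rewrite sumR_front. simpl. ring. Qed.

Lemma pair_even (F : nat -> R) H : forall c,
  sumR (2*H) (fun i => F (c+i)%nat) = sumR H (fun i => F (c+i)%nat + F (c+2*H-1-i)%nat).
Proof.
  induction H as [|H IHH]; intros c. simpl. auto.
  replace (2 * S H)%nat with (S (S (2*H))) by lia.
  rewrite sumR_peel2, sumR_front.
  rewrite (sumR_ext (2*H) _ (fun i => F (S c + i)%nat)) by (intros; f_equal; lia).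
  rewrite IHH.
  rewrite (sumR_ext H (fun i => F (S c + i)%nat + F (S c + 2*H-1-i)%nat)
     (fun i => F (c + S i)%nat + F (c + S (S (2 * H)) - 1 - S i)%nat)).
  replace (c + S (S (2 * H)) - 1 - 0)%nat with (c + S (2*H))%nat by lia.
  rewrite Nat.add_0_r. ring.
  intros i Hi. f_equal; apply f_equal; lia.
Qed.

Lemma pair_odd (F : nat -> R) H : forall c,
  sumR (2*H+1) (fun i => F (c+i)%nat) =
  sumR H (fun i => F (c+i)%nat + F (c+2*H-i)%nat) + F (c+H)%nat.
Proof.
  induction H as [|H IHH]; intros c. simpl. ring.
  replace (2 * S H + 1)%nat with (S (S (2*H+1))) by lia.
  rewrite sumR_peel2, sumR_front.
  rewrite (sumR_ext (2*H+1) _ (fun i => F (S c + i)%nat)) by (intros; f_equal; lia).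
  rewrite IHH.
  rewrite (sumR_ext H (fun i => F (S c + i)%nat + F (S c + 2*H-i)%nat)
     (fun i => F (c + S i)%nat + F (c + 2 * S H - S i)%nat)).
  replace (c + 2 * S H - 0)%nat with (c + S (2*H+1))%nat by lia.
  replace (S c + H)%nat with (c + S H)%nat by lia.
  rewrite Nat.add_0_r. ring.
  intros i Hi. f_equal; apply f_equal; lia.
Qed.

Definition Gs (s : nat) (r : R) : R := ln (3/2 - Rabs r / INR s + (Rabs r / INR s)^2).

Lemma Gs_opp s r : Gs s (-r) = Gs s r.
Proof. unfold Gs. rewrite Rabs_Ropp. auto. Qed.

Lemma Gs_refl s r : (1 <= s)%nat -> 0 <= r <= INR s -> Gs s (INR s - r) = Gs s r.
Proof.
  intros Hs Hr. assert (INR s <> 0) by (apply not_0_INR; lia).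
  unfold Gs. rewrite !Rabs_pos_eq by lra. f_equal. field. auto.
Qed.

Lemma cyc s a : (1 <= s)%nat -> (a < s)%nat ->
  sumR s (fun b => Gs s (INR a - INR b)) = sumR s (fun m => Gs s (INR m)).
Proof.
  intros Hs Ha.
  assert (E1 : sumR (a + (s-a)) (fun b => Gs s (INR a - INR b)) =
     sumR a (fun b => Gs s (INR a - INR b)) + sumR (s-a) (fun i => Gs s (INR i))).
  { rewrite sumR_add. f_equal. apply sumR_ext. intros k _. rewrite plus_INR.
    replace (INR a - (INR a + INR k)) with (- INR k) by ring. apply Gs_opp. }
  assert (E2 : sumR ((s-a) + a) (fun m => Gs s (INR m)) =
     sumR (s-a) (fun i => Gs s (INR i)) + sumR a (fun b => Gs s (INR a - INR b))).
  { rewrite sumR_add. f_equal. apply sumR_ext. intros b Hb.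
    rewrite plus_INR, minus_INR by lia.
    replace (INR s - INR a + INR b) with (INR s - (INR a - INR b)) by ring.
    apply Gs_refl; auto.
    assert (INR b < INR a) by (apply lt_INR; lia).
    assert (INR a <= INR s) by (apply le_INR; lia).
    pose proof (pos_INR b). lra. }
  replace (a + (s-a))%nat with s in E1 by lia.
  replace ((s-a) + a)%nat with s in E2 by lia. lra.
Qed.

Lemma S_odd s h : (s = 2*h+1)%nat ->
  sumR s (fun m => Gs s (INR m)) = Gs s 0 + 2 * sumR h (fun i => Gs s (INR (1+i))).
Proof.
  intros Hs. set (F := fun m => Gs s (INR m)).
  assert (E : sumR (S (2*h)) F = F O + sumR h (fun i => F (1+i)%nat + F (1+2*h-1-i)%nat)).
  { rewrite sumR_front. rewrite <- pair_even. reflexivity. }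
  replace (S (2*h)) with s in E by lia. rewrite E.
  rewrite (sumR_ext h _ (fun i => 2 * F (1+i)%nat)).
  rewrite sumR_scal. unfold F. simpl INR. auto.
  intros i Hi. unfold F. replace (1 + 2*h - 1 - i)%nat with (s - (1+i))%nat by lia.
  rewrite minus_INR by lia. rewrite Gs_refl; [ring|lia|].
  split. apply pos_INR. apply le_INR; lia.
Qed.

Lemma S_even s h : (s = 2*h+2)%nat ->
  sumR s (fun m => Gs s (INR m)) = Gs s 0 + 2 * sumR h (fun i => Gs s (INR (1+i))) + Gs s (INR (1+h)).
Proof.
  intros Hs. set (F := fun m => Gs s (INR m)).
  assert (E : sumR (S (2*h+1)) F = F O + (sumR h (fun i => F (1+i)%nat + F (1+2*h-i)%nat) + F (1+h)%nat)).
  { rewrite sumR_front. rewrite <- pair_odd. reflexivity. }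
  replace (S (2*h+1)) with s in E by lia. rewrite E.
  rewrite (sumR_ext h _ (fun i => 2 * F (1+i)%nat)).
  rewrite sumR_scal. unfold F. simpl INR. ring.
  intros i Hi. unfold F. replace (1 + 2*h - i)%nat with (s - (1+i))%nat by lia.
  rewrite minus_INR by lia. rewrite Gs_refl; [ring|lia|].
  split. apply pos_INR. apply le_INR; lia.
Qed.

Lemma Hk_ge p k v w : 5/4 <= Hk p k v w.
Proof. unfold Hk, Qf. destruct (Nat.ltb k p). destruct (Req_EM_T v w); lra.
  cbv zeta. set (d := Rabs (v - w)). pose proof (pow2_ge_0 (d - 1/2)). replace (3/2 - d + d^2) with ((d - 1/2)^2 + 5/4) by field. lra. Qed.

Lemma Hk_diag p k v : Hk p k v v = 3/2.
Proof. unfold Hk, Qf. destruct (Nat.ltb k p). destruct (Req_EM_T v v); [auto|congruence].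
  replace (v - v) with 0 by ring. rewrite Rabs_R0. ring. Qed.

Lemma prodN_pos N g : (forall k, (k < N)%nat -> 0 < g k) -> 0 < prodN N g.
Proof. induction N; intros H; simpl. lra. apply Rmult_lt_0_compat. apply IHN; intros; apply H; lia. apply H; lia. Qed.

Lemma ln_prodN N g : (forall k, (k < N)%nat -> 0 < g k) -> ln (prodN N g) = sumR N (fun k => ln (g k)).
Proof. induction N; intros H; simpl. apply ln_1.
  rewrite ln_mult. rewrite IHN. auto. intros; apply H; lia. apply prodN_pos; intros; apply H; lia. apply H; lia. Qed.

Lemma prodN_exp N g : prodN N (fun k => exp (g k)) = exp (sumR N g).
Proof. induction N; simpl. rewrite exp_0; auto. rewrite IHN, exp_plus; auto. Qed.

Lemma Qf_row s x y : (1 <= s)%nat ->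
  ln (Qf ((2 * INR x + 1) / (2 * INR s)) ((2 * INR y + 1) / (2 * INR s))) = Gs s (INR x - INR y).
Proof.
  intros Hs. assert (0 < INR s) by (apply lt_0_INR; lia).
  unfold Qf, Gs. f_equal.
  replace ((2 * INR x + 1) / (2 * INR s) - (2 * INR y + 1) / (2 * INR s)) with ((INR x - INR y) / INR s)
    by (field; lra).
  unfold Rdiv. rewrite Rabs_mult, (Rabs_pos_eq (/ INR s)). auto.
  apply Rlt_le, Rinv_0_lt_compat; auto.
Qed.

Lemma amgm_tan L M : exp M * (1 + L - M) <= exp L.
Proof.
  replace (exp L) with (exp M * exp (L - M)) by (rewrite <- exp_plus; f_equal; ring).
  apply Rmult_le_compat_l. apply Rlt_le, exp_pos.
  pose proof (exp_ineq1_le (L - M)). lra.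
Qed.

Lemma unit_frac a s : (a < s)%nat -> 0 <= (2*INR a+1)/(2*INR s) <= 1.
Proof.
  intros H. assert (INR a + 1 <= INR s) by (rewrite <- S_INR; apply le_INR; lia).
  pose proof (pos_INR a). assert (0 < 2*INR s) by lra. split.
  apply Rlt_le, Rdiv_lt_0_compat; lra.
  unfold Rdiv. apply Rmult_le_reg_r with (2*INR s); [lra|].
  rewrite Rmult_assoc, Rinv_l, Rmult_1_r, Rmult_1_l by lra. lra.
Qed.

Lemma Gs0 s : (1 <= s)%nat -> Gs s 0 = ln (3/2).
Proof. intros. unfold Gs. rewrite Rabs_R0. f_equal. assert (INR s <> 0) by (apply not_0_INR; lia). field. auto. Qed.

Lemma prod_term_exp n q s2 h : (1 <= s2)%nat ->
  prod_term n q s2 h = exp ((2 * INR n * INR q / (INR s2 * (INR n - 1))) * sumR h (fun i => Gs s2 (INR (1+i)))).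
Proof.
  intros Hs. unfold prod_term. rewrite prod1R_prodN. rewrite <- sumR_scal, <- prodN_exp.
  apply prodN_ext. intros k Hk. unfold Rpower. f_equal. f_equal. unfold Gs.
  rewrite Rabs_pos_eq by apply pos_INR. f_equal. assert (INR s2 <> 0) by (apply not_0_INR; lia).
  replace (1 + k)%nat with (S k) by lia. field. auto.
Qed.

Lemma pow_exp x k : 0 < x -> x ^ k = exp (INR k * ln x).
Proof. intros. rewrite <- Rpower_pow by auto. reflexivity. Qed.

Theorem corollary2 (n p q s1 s2 : nat) (D : nat -> nat -> nat) :
  (2 <= n)%nat -> (1 <= s1)%nat -> (1 <= s2)%nat ->
  Utype n p q s1 s2 D ->
  (Nat.odd s2 = true -> QQD2 n p q s1 s2 D >= LB_odd n p q s1 s2) /\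
  (Nat.even s2 = true -> QQD2 n p q s1 s2 D >= LB_even n p q s1 s2).
Proof.
  intros Hn Hs1 Hs2 [U1 [U2 [U3 U4]]].
  assert (Rn : 0 < INR n) by (apply lt_0_INR; lia).
  assert (Rn1 : 1 < INR n) by (apply lt_1_INR; lia).
  assert (R1 : 0 < INR s1) by (apply lt_0_INR; lia).
  assert (R2 : 0 < INR s2) by (apply lt_0_INR; lia).
  set (c := cq1 s1 ^ p * (4/3) ^ q).
  set (L3 := ln (3/2)). set (L5 := ln (5/4)).
  set (Sq := sumR s2 (fun m => Gs s2 (INR m))).
  set (C1 := INR n / INR s1 * (L3 + (INR s1 - 1) * L5)).
  set (C2 := INR n / INR s2 * Sq).
  set (Ck := fun k => if Nat.ltb k p then C1 else C2).
  set (x := row p s2 D).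
  assert (Xq : forall i k, (k < p)%nat -> x i k = INR (D i k)).
  { intros i k Hk. unfold x, row. destruct (Nat.ltb_spec k p); [auto|lia]. }
  assert (Xr : forall i k, (p <= k)%nat -> x i k = (2 * INR (D i k) + 1) / (2 * INR s2)).
  { intros i k Hk. unfold x, row. destruct (Nat.ltb_spec k p); [lia|auto]. }
  assert (HA : intF p q s1 (fun t => intF p q s1 (fun z => kern p q t z)) = c) by (apply A_eq; auto).
  assert (HB : forall i, (i < n)%nat -> intF p q s1 (fun t => kern p q t (x i)) = c).
  { intros i Hi. rewrite inner_sym, inner_valid. apply prodN_cval.
    - intros k Hk. exists (D i k). split. apply Xq; auto. apply U1; auto.
    - intros k Hk. rewrite Xr by lia. apply unit_frac. apply U2; auto. }
  assert (HsumB : sumR n (fun i => intF p q s1 (fun t => kern p q t (x i))) = INR n * c).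
  { rewrite (sumR_ext _ _ (fun _ => c)) by (intros; apply HB; auto). apply sumR_const. }
  set (K := fun i j => kern p q (x i) (x j)).
  set (l := fun k i j => ln (Hk p k (x i k) (x j k))).
  assert (Kpos : forall i j, 0 < K i j).
  { intros. unfold K. rewrite kern_prod. apply prodN_pos. intros.
    pose proof (Hk_ge p k (x i k) (x j k)). lra. }
  assert (Kdiag : forall i, K i i = (3/2)^(p+q)).
  { intros. unfold K. rewrite kern_prod, <- prodN_const. apply prodN_ext. intros; apply Hk_diag. }
  assert (lnK : forall i j, ln (K i j) = sumR (p+q) (fun k => l k i j)).
  { intros. unfold K. rewrite kern_prod, ln_prodN. reflexivity. intros.
    pose proof (Hk_ge p k (x i k) (x j k)). lra. }
  assert (Ldiag : forall i, ln (K i i) = INR (p+q) * L3).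
  { intros. rewrite lnK. unfold l. rewrite (sumR_ext _ _ (fun _ => L3)). apply sumR_const.
    intros; rewrite Hk_diag; auto. }
  assert (Col : forall i k, (i < n)%nat -> (k < p+q)%nat -> sumR n (fun j => l k i j) = Ck k).
  { intros i k Hi Hk0. unfold Ck, l. destruct (Nat.ltb_spec k p).
    - pose (psi := fun b => ln (Hk p k (INR (D i k)) (INR b))).
      rewrite (sumR_ext n _ (fun j => psi (D j k))).
      2:{ intros j Hj. unfold psi. rewrite !Xq by auto. auto. }
      rewrite (column_sum n D k s1 psi Hs1 (fun j Hj => U1 j k Hj ltac:(lia)) (fun b Hb => U3 k b ltac:(lia) Hb)).
      unfold C1. f_equal. unfold psi.
      rewrite (sumR_ext s1 _ (fun b => if Req_EM_T (INR (D i k)) (INR b) then L3 else L5)).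
      apply sum_ind_INR. apply U1; auto.
      intros b Hb. unfold Hk. destruct (Nat.ltb_spec k p); [|lia]. destruct (Req_EM_T _ _); auto.
    - pose (psi := fun b => Gs s2 (INR (D i k) - INR b)).
      rewrite (sumR_ext n _ (fun j => psi (D j k))).
      2:{ intros j Hj. unfold psi. rewrite !Xr by lia. unfold Hk. destruct (Nat.ltb_spec k p); [lia|]. apply Qf_row; auto. }
      rewrite (column_sum n D k s2 psi Hs2 (fun j Hj => U2 j k Hj ltac:(lia)) (fun b Hb => U4 k b ltac:(lia) Hb)).
      unfold C2, Sq, psi. f_equal. apply cyc; [auto| apply U2; auto; lia]. }
  assert (SumCk : sumR (p+q) Ck = INR p * C1 + INR q * C2).
  { rewrite sumR_add. rewrite (sumR_ext p Ck (fun _ => C1)), (sumR_ext q (fun k => Ck (p+k)%nat) (fun _ => C2)), !sumR_const. auto.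
    intros k Hk; unfold Ck; destruct (Nat.ltb_spec (p+k) p); [lia|auto].
    intros k Hk; unfold Ck; destruct (Nat.ltb_spec k p); [auto|lia]. }
  set (Lsum := sumR n (fun i => sumR n (fun j => ln (K i j)) - ln (K i i))).
  assert (HL : Lsum = INR n * (INR p * C1 + INR q * C2 - INR (p+q) * L3)).
  { unfold Lsum. rewrite (sumR_ext n _ (fun _ => INR p * C1 + INR q * C2 - INR (p+q) * L3)).
    apply sumR_const.
    intros i Hi. rewrite Ldiag, <- SumCk.
    f_equal. rewrite (sumR_ext n _ (fun j => sumR (p+q) (fun k => l k i j))) by (intros; apply lnK).
    rewrite sumR_swap. apply sumR_ext. intros k Hk. apply Col; auto. }
  set (M := Lsum / (INR n * (INR n - 1))).
  set (O := sumR n (fun i => sumR n (fun j => if Nat.eqb j i then 0 else K i j))).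
  assert (HKsum : sumR n (fun i => sumR n (fun j => K i j)) = INR n * (3/2)^(p+q) + O).
  { unfold O. rewrite (sumR_ext n _ (fun i => K i i + sumR n (fun j => if Nat.eqb j i then 0 else K i j))).
    rewrite sumR_plus. rewrite (sumR_ext n (fun i => K i i) (fun _ => (3/2)^(p+q))) by (intros; apply Kdiag).
    rewrite sumR_const. auto.
    intros i Hi. rewrite sumR_if by auto. assert (sumR n (fun j => K i j) = sumR n (K i)) by reflexivity. lra. }
  assert (HO : INR n * (INR n - 1) * exp M <= O).
  { apply Rle_trans with (sumR n (fun i => sumR n (fun j => if Nat.eqb j i then 0 else exp M * (1 + ln (K i j) - M)))).
    2:{ unfold O. apply sumR_le; intros i Hi. apply sumR_le; intros j Hj. destruct (Nat.eqb j i). lra.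
        rewrite <- (exp_ln (K i j)) at 2 by auto. apply amgm_tan. }
    right.
    rewrite (sumR_ext n _ (fun i => exp M * ((1 - M) * (INR n - 1) + (sumR n (fun j => ln (K i j)) - ln (K i i))))).
    2:{ intros i Hi.
        rewrite (sumR_ext n _ (fun j => exp M * ((1 - M) * (if Nat.eqb j i then 0 else 1) + (if Nat.eqb j i then 0 else ln (K i j))))).
        2:{ intros j Hj. destruct (Nat.eqb j i); ring. }
        rewrite sumR_scal, sumR_plus, sumR_scal.
        rewrite (sumR_if n i (fun _ => 1)) by auto.
        rewrite (sumR_if n i (fun j => ln (K i j))) by auto.
        rewrite sumR_const. ring. }
    rewrite sumR_scal, sumR_plus, sumR_const. fold Lsum. unfold M. field. lra. }
  assert (Hc : - ((5 * INR s1 + 1) / (4 * INR s1)) ^ p * (4/3) ^ q = - c).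
  { unfold c, cq1. replace ((5 * INR s1 + 1) / (4 * INR s1)) with (/ INR s1 * (3 / 2 + (INR s1 - 1) * (5 / 4))) by (field; lra). ring. }
  assert (HQ : QQD2 n p q s1 s2 D >= - c + 1 / INR n * (3/2) ^ (p+q) + (INR n - 1) / INR n * exp M).
  { unfold QQD2. fold x. change (fun i => intF p q s1 (fun t => kern p q t (x i))) with
      (fun i => intF p q s1 (fun t => kern p q t (x i))).
    rewrite HA, HsumB.
    change (sumR n (fun i => sumR n (fun j => kern p q (x i) (x j)))) with (sumR n (fun i => sumR n (fun j => K i j))).
    rewrite HKsum.
    apply Rle_ge.
    assert (E : - c + 1 / INR n * (3/2) ^ (p+q) + (INR n - 1) / INR n * exp M =
       c - 2 / INR n * (INR n * c) + 1 / INR n ^ 2 * (INR n * (3/2)^(p+q) + INR n * (INR n - 1) * exp M)).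
    { field. lra. }
    rewrite E. apply Rplus_le_compat_l. apply Rmult_le_compat_l.
    apply Rlt_le, Rdiv_lt_0_compat; [lra| apply pow_lt; lra]. lra. }
  assert (L65 : ln (6/5) = L3 - L5).
  { replace (6/5) with ((3/2)/(5/4)) by field. apply ln_div; lra. }
  assert (HS0 : Gs s2 0 = L3) by (apply Gs0; auto).
  split.
  - intros Hodd. apply Nat.odd_spec in Hodd. destruct Hodd as [h Hh].
    assert (Hh2 : ((s2 - 1) / 2)%nat = h).
    { replace (s2 - 1)%nat with (h * 2)%nat by lia. apply Nat.div_mul. lia. }
    pose proof (S_odd s2 h Hh) as HSq. fold Sq in HSq.
    unfold LB_odd. rewrite Hh2, Hc, prod_term_exp by auto.
    rewrite (pow_exp (5/4) p) by lra.
    unfold Rpower. fold L5 L3. rewrite L65.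
    rewrite !Rmult_assoc, <- !exp_plus.
    set (T := sumR h (fun i => Gs s2 (INR (1+i)))) in *.
    match goal with |- _ >= _ + _ + _ * exp ?E => replace E with M end. exact HQ.
    unfold M. rewrite HL. unfold C1, C2. rewrite HSq, HS0, plus_INR.
    field. repeat split; lra.
  - intros Hev. apply Nat.even_spec in Hev. destruct Hev as [m Hm].
    set (h := (m - 1)%nat).
    assert (Hh : s2 = (2*h+2)%nat) by (unfold h; lia).
    assert (Hh2 : (s2 / 2 - 1)%nat = h).
    { unfold h. rewrite Hm. replace (2*m)%nat with (m*2)%nat by lia. rewrite Nat.div_mul; lia. }
    pose proof (S_even s2 h Hh) as HSq. fold Sq in HSq.
    assert (Hmid : Gs s2 (INR (1+h)) = L5).
    { unfold Gs, L5. rewrite Rabs_pos_eq by apply pos_INR. f_equal.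
      assert (E : INR s2 = 2 * INR (1+h)) by (replace (1+h)%nat with (S h) by lia; rewrite S_INR, Hh, plus_INR, mult_INR; simpl; ring).
      rewrite E. assert (0 < INR (1+h)) by (apply lt_0_INR; lia). field. lra. }
    unfold LB_even. rewrite Hh2, Hc, prod_term_exp by auto.
    rewrite (pow_exp (5/4) p) by lra.
    unfold Rpower. fold L5 L3. rewrite L65.
    rewrite !Rmult_assoc, <- !exp_plus.
    set (T := sumR h (fun i => Gs s2 (INR (1+i)))) in *.
    match goal with |- _ >= _ + _ + _ * exp ?E => replace E with M end. exact HQ.
    unfold M. rewrite HL. unfold C1, C2. rewrite HSq, HS0, Hmid, plus_INR.
    field. repeat split; lra.
Qed.
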